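(* Let $G$ be a finitely generated nilpotent group. There is a first-order formula $\psi(x)$ in the language of groups such that for every group $H$ with $H\equiv G$, $\psi$ defines $Is(H')$ in $H$.
   Context: $Is(H')=\{x\in H:\ x^k\in H'\text{ for some integer }k\ge1\}$, where $H'$ is the commutator subgroup of $H$. *)

(* Defs.v *)
From Stdlib Require Import Arith List.

Set Implicit Arguments.

Record Group := {
  carrier :> Type;
  gmul : carrier -> carrier -> carrier;
  gone : carrier;
  ginv : carrier -> carrier;
  gmulA : forall x y z, gmul x (gmul y z) = gmul (gmul x y) z;
  gmul1 : forall x, gmul gone x = x;
  gmulV : forall x, gmul (ginv x) x = gone
}.

Section GroupNotions.
Variable G : Group.

Inductive gen (S : G -> Prop) : G -> Prop :=
| gen_base : forall x, S x -> gen S x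
| gen_one : gen S (gone G)
| gen_mul : forall x y, gen S x -> gen S y -> gen S (gmul G x y)
| gen_inv : forall x, gen S x -> gen S (ginv G x).

Definition comm (x y : G) : G :=
  gmul G (gmul G (ginv G x) (ginv G y)) (gmul G x y).

Definition derived : G -> Prop :=
  gen (fun z => exists x y, z = comm x y).

Fixpoint gpow (x : G) (n : nat) : G :=
  match n with 0 => gone G | S m => gmul G x (gpow x m) end.

Definition Is_derived (x : G) : Prop :=
  exists k, 1 <= k /\ derived (gpow x k).

Fixpoint lcs (i : nat) : G -> Prop :=
  match i with
  | 0 => fun _ => True
  | S j => gen (fun z => exists a g, lcs j a /\ z = comm a g)
  end.

Definition nilpotent : Prop :=
  exists c, forall x, lcs c x -> x = gone G.

Definition finitely_generated : Prop :=
  exists l : list G, forall x, gen (fun y => In y l) x.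

End GroupNotions.

Inductive term :=
| tvar : nat -> term
| tone : term
| tmul : term -> term -> term
| tinv : term -> term.

Inductive formula :=
| fEq : term -> term -> formula
| fFalse : formula
| fNot : formula -> formula
| fAnd : formula -> formula -> formula
| fOr : formula -> formula -> formula
| fImp : formula -> formula -> formula
| fAll : nat -> formula -> formula
| fEx : nat -> formula -> formula.

Fixpoint tfree (n : nat) (t : term) : bool :=
  match t with
  | tvar m => Nat.eqb n m
  | tone => false
  | tmul a b => tfree n a || tfree n b
  | tinv a => tfree n a
  end.

Fixpoint free_in (n : nat) (f : formula) : bool :=
  match f with
  | fEq a b => tfree n a || tfree n b
  | fFalse => false
  | fNot g => free_in n g
  | fAnd g h | fOr g h | fImp g h => free_in n g || free_in n h
  | fAll m g | fEx m g => negb (Nat.eqb n m) && free_in n g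
  end.

Definition sentence (f : formula) : Prop := forall n, free_in n f = false.

Section Semantics.
Variable G : Group.

Fixpoint teval (env : nat -> G) (t : term) : G :=
  match t with
  | tvar m => env m
  | tone => gone G
  | tmul a b => gmul G (teval env a) (teval env b)
  | tinv a => ginv G (teval env a)
  end.

Definition upd (env : nat -> G) (m : nat) (v : G) : nat -> G :=
  fun k => if Nat.eqb k m then v else env k.

Fixpoint sat (env : nat -> G) (f : formula) : Prop :=
  match f with
  | fEq a b => teval env a = teval env b
  | fFalse => False
  | fNot g => ~ sat env g
  | fAnd g h => sat env g /\ sat env h
  | fOr g h => sat env g \/ sat env h
  | fImp g h => sat env g -> sat env h
  | fAll m g => forall v : G, sat (upd env m v) g
  | fEx m g => exists v : G, sat (upd env m v) g
  end.

End Semantics.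

Definition elem_equiv (G H : Group) : Prop :=
  forall f, sentence f ->
    ((forall e : nat -> G, @sat G e f) <-> (forall e : nat -> H, @sat H e f)).

Definition unary_formula (psi : formula) : Prop :=
  forall n, n <> 0 -> free_in n psi = false.

Definition defines (H : Group) (psi : formula) (A : H -> Prop) : Prop :=
  forall env : nat -> H, @sat H env psi <-> A (env 0).

(* Main.v *)
Require Import Defs.
From Stdlib Require Import Arith List Lia Classical Setoid Morphisms.

#[global] Arguments gen {G} S _.
#[global] Arguments comm {G} x y.
#[global] Arguments lcs {G} i _.
#[global] Arguments derived {G} _.
#[global] Arguments gpow {G} x n.
Infix "**" := (gmul _) (at level 40, left associativity).
Notation "x ^-1" := (ginv _ x) (at level 3, left associativity, format "x ^-1").

Lemma g_assoc (G : Group) (x y z : G) : x ** y ** z = x ** (y ** z).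
Proof. now rewrite gmulA. Qed.
Lemma g_1l (G : Group) (x : G) : gone G ** x = x. Proof. apply gmul1. Qed.
Lemma g_Vl (G : Group) (x : G) : x^-1 ** x = gone G. Proof. apply gmulV. Qed.
Lemma g_Vr (G : Group) (x : G) : x ** x^-1 = gone G.
Proof.
  rewrite <- (gmul1 G (x ** x^-1)).
  rewrite <- (gmulV G (x^-1)) at 1.
  rewrite <- gmulA, (gmulA G (x^-1)), gmulV, gmul1. apply gmulV.
Qed.
Lemma g_1r (G : Group) (x : G) : x ** gone G = x.
Proof. now rewrite <- (gmulV G x), gmulA, g_Vr, gmul1. Qed.
Lemma g_Vlc (G : Group) (x y : G) : x^-1 ** (x ** y) = y.
Proof. now rewrite gmulA, gmulV, gmul1. Qed.
Lemma g_Vrc (G : Group) (x y : G) : x ** (x^-1 ** y) = y.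
Proof. now rewrite gmulA, g_Vr, gmul1. Qed.
Lemma g_uniq_inv (G : Group) (x y : G) : x ** y = gone G -> y = x^-1.
Proof. intro H. rewrite <- (g_Vlc G x y), H. apply g_1r. Qed.
Lemma g_VV (G : Group) (x : G) : (x^-1)^-1 = x.
Proof. symmetry. apply g_uniq_inv. apply g_Vl. Qed.
Lemma g_V1 (G : Group) : (gone G)^-1 = gone G.
Proof. symmetry. apply g_uniq_inv. apply gmul1. Qed.
Lemma g_VM (G : Group) (x y : G) : (x ** y)^-1 = y^-1 ** x^-1.
Proof. symmetry. apply g_uniq_inv. rewrite g_assoc, g_Vrc. apply g_Vr. Qed.

Global Hint Rewrite g_assoc g_1l g_1r g_Vl g_Vr g_Vlc g_Vrc g_VV g_V1 g_VM : gsimp.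
Ltac gs := autorewrite with gsimp.
Ltac gs_in H := autorewrite with gsimp in H.

Lemma test (G : Group) (a b c : G) : (a ** b)^-1 ** (a ** c) ** (c^-1 ** b) = gone G.
Proof. gs. reflexivity. Qed.

Record nsub (G : Group) (P : G -> Prop) : Prop := {
  ns1 : P (gone G);
  nsM : forall x y, P x -> P y -> P (x ** y);
  nsV : forall x, P x -> P (x^-1);
  nsJ : forall x g, P x -> P (g^-1 ** x ** g) }.
Arguments nsub {G} P.
Arguments ns1 {G P}. Arguments nsM {G P}. Arguments nsV {G P}. Arguments nsJ {G P}.

Definition cong {G : Group} (P : G -> Prop) (x y : G) : Prop := P (x^-1 ** y).

Section C.
Context {G : Group} {P : G -> Prop} (HP : nsub P).

Lemma cong_refl x : cong P x x.
Proof. unfold cong. gs. apply HP. Qed.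
Lemma cong_sym x y : cong P x y -> cong P y x.
Proof. unfold cong. intro H. apply (nsV HP) in H. gs_in H. exact H. Qed.
Lemma cong_trans x y z : cong P x y -> cong P y z -> cong P x z.
Proof. unfold cong. intros H1 H2. pose proof (nsM HP _ _ H1 H2) as H. gs_in H. exact H. Qed.
Lemma cong_mul x x' y y' : cong P x x' -> cong P y y' -> cong P (x ** y) (x' ** y').
Proof.
  unfold cong. intros H1 H2.
  pose proof (nsJ HP _ y H1) as H3.
  pose proof (nsM HP _ _ H3 H2) as H. gs_in H. gs. exact H.
Qed.
Lemma cong_inv x y : cong P x y -> cong P (x^-1) (y^-1).
Proof.
  unfold cong. intros H1. apply (nsV HP) in H1.
  pose proof (nsJ HP _ (y^-1) H1) as H. gs_in H. gs. exact H.
Qed.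
End C.


Lemma gen_ind_sub {G : Group} (S Q : G -> Prop) :
  (forall x, S x -> Q x) -> Q (gone G) -> (forall x y, Q x -> Q y -> Q (x ** y)) ->
  (forall x, Q x -> Q (x^-1)) -> forall x, gen S x -> Q x.
Proof. intros HS H1 HM HV x Hx. induction Hx; auto. Qed.

Lemma gen_mono {G : Group} (S T : G -> Prop) : (forall x, S x -> T x) -> forall x, gen S x -> gen T x.
Proof. intros HST. apply gen_ind_sub; auto using gen_base, gen_one, gen_mul, gen_inv. Qed.

Lemma gen_nsub {G : Group} (S : G -> Prop) :
  (forall x g, S x -> S (g^-1 ** x ** g)) -> nsub (gen S).
Proof.
  intros HJ. split.
  - apply gen_one.
  - apply gen_mul.
  - apply gen_inv.
  - intros x g Hx. induction Hx.
    + apply gen_base; auto.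
    + assert (E : g^-1 ** gone G ** g = gone G) by (gs; reflexivity). rewrite E. apply gen_one.
    + assert (E : g^-1 ** (x ** y) ** g = (g^-1 ** x ** g) ** (g^-1 ** y ** g)) by (gs; reflexivity).
      rewrite E. now apply gen_mul.
    + assert (E : g^-1 ** x^-1 ** g = (g^-1 ** x ** g)^-1) by (gs; reflexivity).
      rewrite E. now apply gen_inv.
Qed.

Lemma comm_conj {G : Group} (a b g : G) : g^-1 ** comm a b ** g = comm (g^-1 ** a ** g) (g^-1 ** b ** g).
Proof. unfold comm. gs. reflexivity. Qed.

Lemma comm_inv {G : Group} (a b : G) : (comm a b)^-1 = comm b a.
Proof. unfold comm. gs. reflexivity. Qed.

Lemma lcs_nsub (G : Group) (i : nat) : nsub (@lcs G i).
Proof.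
  induction i.
  - split; simpl; auto.
  - simpl. apply gen_nsub. intros x g [a [b [Ha ->]]].
    exists (g^-1 ** a ** g), (g^-1 ** b ** g). split.
    + now apply (nsJ IHi).
    + apply comm_conj.
Qed.

Lemma derived_nsub (G : Group) : nsub (@derived G).
Proof.
  unfold derived. apply gen_nsub. intros x g [a [b ->]].
  exists (g^-1 ** a ** g), (g^-1 ** b ** g). apply comm_conj.
Qed.

Lemma derived_lcs1 (G : Group) x : @derived G x <-> @lcs G 1 x.
Proof.
  split; apply gen_mono.
  - intros z [a [b ->]]. exists a, b. auto.
  - intros z [a [b [_ ->]]]. exists a, b. auto.
Qed.

Lemma lcs_comm (G : Group) i (a g : G) : @lcs G i a -> @lcs G (S i) (comm a g).
Proof. intros H. apply gen_base. exists a, g. auto. Qed.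
Lemma lcs_comm' (G : Group) i (a g : G) : @lcs G i a -> @lcs G (S i) (comm g a).
Proof. intros H. rewrite <- comm_inv. apply (nsV (lcs_nsub G (S i))). now apply lcs_comm. Qed.

Lemma cong_swap {G : Group} (P : G -> Prop) (HP : nsub P) (x y : G) :
  P (comm y x) -> cong P (x ** y) (y ** x).
Proof. unfold cong, comm. gs. auto. Qed.

Fixpoint Pr {G : Group} (l : list G) (u : nat -> G) : G :=
  match l with nil => gone G | x :: l' => comm x (u 0) ** Pr l' (fun k => u (S k)) end.

Lemma comm_mul_r {G : Group} (x y z : G) : comm x (y ** z) = comm x z ** comm x y ** comm (comm x y) z.
Proof. unfold comm. gs. reflexivity. Qed.
Lemma comm_mul_l {G : Group} (y z a : G) : comm (y ** z) a = comm y a ** comm (comm y a) z ** comm z a.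
Proof. unfold comm. gs. reflexivity. Qed.
Lemma comm_inv_r {G : Group} (g a : G) : comm g (a^-1) = a ** (comm g a)^-1 ** a^-1.
Proof. unfold comm. gs. reflexivity. Qed.
Lemma comm_inv_l {G : Group} (h a : G) : comm (h^-1) a = h ** (comm h a)^-1 ** h^-1.
Proof. unfold comm. gs. reflexivity. Qed.
Lemma comm_1l {G : Group} (a : G) : comm (gone G) a = gone G.
Proof. unfold comm. gs. reflexivity. Qed.
Lemma comm_1r {G : Group} (a : G) : comm a (gone G) = gone G.
Proof. unfold comm. gs. reflexivity. Qed.

Lemma Pr_one {G : Group} (l : list G) : Pr l (fun _ => gone G) = gone G.
Proof. induction l; simpl; auto. rewrite IHl, comm_1r. gs. reflexivity. Qed.

Section Width.
Context {G : Group} (j : nat).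
Let HN := lcs_nsub G (S (S j)).
Let HM := lcs_nsub G (S j).
Let HL := lcs_nsub G j.

Lemma cmod_l (c g : G) : lcs (S j) c -> cong (lcs (S (S j))) (c ** g) (g ** c).
Proof. intro H. apply cong_swap; auto. now apply lcs_comm'. Qed.
Lemma cmod_r (c g : G) : lcs (S j) c -> cong (lcs (S (S j))) (g ** c) (c ** g).
Proof. intro H. apply cong_swap; auto. now apply lcs_comm. Qed.
Lemma cmod_conj (c g : G) : lcs (S j) c -> cong (lcs (S (S j))) c (g ** c ** g^-1).
Proof.
  intro H. unfold cong. assert (E : c^-1 ** (g ** c ** g^-1) = comm c (g^-1)) by (unfold comm; gs; reflexivity).
  rewrite E. now apply lcs_comm.
Qed.

Lemma Pr_M (l : list G) u : (forall k, lcs j (u k)) -> lcs (S j) (Pr l u).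
Proof.
  revert u; induction l as [|x l IH]; intros u Hu; simpl.
  - apply (ns1 HM).
  - apply (nsM HM). now apply lcs_comm'. apply IH. auto.
Qed.

Lemma inv_comm_mod (g a : G) : lcs j a -> cong (lcs (S (S j))) ((comm g a)^-1) (comm g (a^-1)).
Proof.
  intro Ha. rewrite comm_inv_r. apply cmod_conj. apply (nsV HM). now apply lcs_comm'.
Qed.

Lemma Pr_mul (l : list G) u1 u2 : (forall k, lcs j (u1 k)) -> (forall k, lcs j (u2 k)) ->
  cong (lcs (S (S j))) (Pr l u1 ** Pr l u2) (Pr l (fun k => u2 k ** u1 k)).
Proof.
  revert u1 u2; induction l as [|x l IH]; intros u1 u2 H1 H2; simpl.
  - rewrite g_1l. apply (cong_refl HN).
  - set (R1 := Pr l (fun k => u1 (S k))). set (R2 := Pr l (fun k => u2 (S k))).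
    apply (cong_trans HN) with (comm x (u1 0) ** comm x (u2 0) ** (R1 ** R2)).
    { replace (comm x (u1 0) ** R1 ** (comm x (u2 0) ** R2)) with
        (comm x (u1 0) ** (R1 ** comm x (u2 0)) ** R2) by (gs; reflexivity).
      replace (comm x (u1 0) ** comm x (u2 0) ** (R1 ** R2)) with
        (comm x (u1 0) ** (comm x (u2 0) ** R1) ** R2) by (gs; reflexivity).
      apply (cong_mul HN); [apply (cong_mul HN)|]; try apply (cong_refl HN).
      apply cmod_l. apply Pr_M. auto. }
    apply (cong_mul HN).
    + unfold cong. rewrite comm_mul_r. gs. apply lcs_comm. now apply lcs_comm'.
    + apply (IH (fun k => u1 (S k)) (fun k => u2 (S k))); auto.
Qed.

Lemma Pr_inv (l : list G) u : (forall k, lcs j (u k)) ->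
  cong (lcs (S (S j))) ((Pr l u)^-1) (Pr l (fun k => (u k)^-1)).
Proof.
  revert u; induction l as [|x l IH]; intros u Hu; simpl.
  - rewrite g_V1. apply (cong_refl HN).
  - rewrite g_VM. apply (cong_trans HN) with ((comm x (u 0))^-1 ** (Pr l (fun k => u (S k)))^-1).
    + apply cmod_r. apply (nsV HM). now apply lcs_comm'.
    + apply (cong_mul HN). now apply inv_comm_mod. apply (IH (fun k => u (S k))). auto.
Qed.

Definition T (l : list G) (z : G) := exists u, (forall k, lcs j (u k)) /\ cong (lcs (S (S j))) (Pr l u) z.

Lemma T_cong l z z' : T l z -> cong (lcs (S (S j))) z z' -> T l z'.
Proof. intros [u [Hu H]] H'. exists u. split; auto. eapply (cong_trans HN); eauto. Qed.
Lemma T_one l : T l (gone G).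
Proof. exists (fun _ => gone G). split. intro; apply (ns1 HL). rewrite Pr_one. apply (cong_refl HN). Qed.
Lemma T_mul l z1 z2 : T l z1 -> T l z2 -> T l (z1 ** z2).
Proof.
  intros [u1 [Hu1 H1]] [u2 [Hu2 H2]]. exists (fun k => u2 k ** u1 k). split.
  - intro k. apply (nsM HL); auto.
  - eapply (cong_trans HN). apply (cong_sym HN). apply Pr_mul; auto. now apply (cong_mul HN).
Qed.
Lemma T_inv l z : T l z -> T l (z^-1).
Proof.
  intros [u [Hu H]]. exists (fun k => (u k)^-1). split.
  - intro k. apply (nsV HL); auto.
  - eapply (cong_trans HN). apply (cong_sym HN). apply Pr_inv; auto. now apply (cong_inv HN).
Qed.

Lemma Pr_single (l : list G) x a : In x l -> lcs j a -> exists u, (forall k, lcs j (u k)) /\ Pr l u = comm x a.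
Proof.
  revert x a; induction l as [|y l IH]; intros x a Hin Ha; [destruct Hin|].
  destruct Hin as [<-|Hin].
  - exists (fun k => match k with 0 => a | _ => gone G end). split.
    + intros [|k]; auto. apply (ns1 HL).
    + simpl. rewrite Pr_one. gs. reflexivity.
  - destruct (IH x a Hin Ha) as [u [Hu E]].
    exists (fun k => match k with 0 => gone G | S k => u k end). split.
    + intros [|k]; auto. apply (ns1 HL).
    + simpl. rewrite comm_1r, g_1l. exact E.
Qed.

Lemma T_comm_gen (l : list G) g : gen (fun y => In y l) g -> forall a, lcs j a -> T l (comm g a).
Proof.
  induction 1 as [x Hx| |x y _ IH1 _ IH2|h _ IH]; intros a Ha.
  - destruct (Pr_single l x a Hx Ha) as [u [Hu E]]. exists u. split; auto. rewrite E. apply (cong_refl HN).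
  - rewrite comm_1l. apply T_one.
  - rewrite comm_mul_l. apply T_cong with (comm x a ** comm y a).
    + apply T_mul; auto.
    + apply (cong_mul HN); [|apply (cong_refl HN)].
      unfold cong. gs. apply lcs_comm. now apply lcs_comm'.
  - rewrite comm_inv_l. apply T_cong with (comm h (a^-1)).
    + apply IH. now apply (nsV HL).
    + apply (cong_trans HN) with ((comm h a)^-1).
      * apply (cong_sym HN). now apply inv_comm_mod.
      * apply cmod_conj. apply (nsV HM). now apply lcs_comm'.
Qed.

Lemma M_T (l : list G) : (forall g, gen (fun y => In y l) g) -> forall z, lcs (S j) z -> T l z.
Proof.
  intros Hl. apply gen_ind_sub.
  - intros x [a [g [Ha ->]]]. rewrite <- comm_inv. apply T_cong with (comm g (a^-1)).
    + apply T_comm_gen; auto. now apply (nsV HL).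
    + apply (cong_sym HN). now apply inv_comm_mod.
  - apply T_one.
  - apply T_mul.
  - apply T_inv.
Qed.

End Width.

Fixpoint prodl {G : Group} (ps : list (G * G)) : G :=
  match ps with nil => gone G | (a, b) :: ps' => comm a b ** prodl ps' end.

Definition Cw {G : Group} (K : nat) (z : G) := exists ps : list (G * G), length ps = K /\ z = prodl ps.

Lemma prodl_app {G : Group} (ps qs : list (G * G)) : prodl (ps ++ qs) = prodl ps ** prodl qs.
Proof. induction ps as [|[a b] ps IH]; simpl. gs; reflexivity. rewrite IH. gs. reflexivity. Qed.

Lemma Cw_mul {G : Group} K1 K2 (z1 z2 : G) : Cw K1 z1 -> Cw K2 z2 -> Cw (K1 + K2) (z1 ** z2).
Proof.
  intros [ps [L1 ->]] [qs [L2 ->]]. exists (ps ++ qs). split.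
  rewrite length_app; lia. symmetry; apply prodl_app.
Qed.

Lemma Pr_Cw {G : Group} (l : list G) u : Cw (length l) (Pr l u).
Proof.
  revert u; induction l as [|x l IH]; intro u; simpl.
  - exists nil. auto.
  - destruct (IH (fun k => u (S k))) as [ps [L E]]. exists ((x, u 0) :: ps). simpl. split; auto.
    now rewrite E.
Qed.

Lemma Cw_derived {G : Group} K (z : G) : Cw K z -> derived z.
Proof.
  intros [ps [_ ->]]. clear K. induction ps as [|[a b] ps IH]; simpl.
  - apply gen_one.
  - apply gen_mul; auto. apply gen_base. eauto.
Qed.

Lemma width {G : Group} : finitely_generated G -> nilpotent G ->
  exists K, forall z : G, derived z -> Cw K z.
Proof.
  intros [l Hl] [c Hc].
  assert (Hc' : forall x : G, lcs (S c) x -> x = gone G).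
  { simpl. apply gen_ind_sub; auto.
    - intros x [a [g [Ha ->]]]. rewrite (Hc a Ha). apply comm_1l.
    - intros x y -> ->. apply g_1l.
    - intros x ->. apply g_V1. }
  assert (Main : forall m j, S j + m = S c -> forall z : G, lcs (S j) z -> Cw (m * length l) z).
  { induction m as [|m IH]; intros j Hj z Hz.
    - replace j with c in Hz by lia. rewrite (Hc' z Hz). exists nil. auto.
    - destruct (M_T j l Hl z Hz) as [u [Hu Hw]].
      replace z with (Pr l u ** ((Pr l u)^-1 ** z)) by (gs; reflexivity).
      replace (S m * length l) with (length l + m * length l) by lia.
      apply Cw_mul. apply Pr_Cw. apply (IH (S j)). lia. exact Hw. }
  exists (c * length l). intros z Hz. apply (Main c 0). lia. now apply derived_lcs1.
Qed.

Lemma gpow_add {G : Group} (x : G) m n : gpow x (m + n) = gpow x m ** gpow x n.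
Proof. induction m; simpl. gs; reflexivity. rewrite IHm. gs. reflexivity. Qed.
Lemma gpow_mul {G : Group} (x : G) m n : gpow x (m * n) = gpow (gpow x m) n.
Proof.
  revert m. induction n; intro m; simpl. now rewrite Nat.mul_0_r.
  rewrite Nat.mul_succ_r, Nat.add_comm, gpow_add, IHn. reflexivity.
Qed.
Lemma gpow_one {G : Group} n : gpow (gone G) n = gone G.
Proof. induction n; simpl; auto. rewrite IHn. apply g_1l. Qed.
Lemma gpow_gen {G : Group} S (x : G) n : gen S x -> gen S (gpow x n).
Proof. intro H. induction n; simpl. apply gen_one. now apply gen_mul. Qed.

Section Ab.
Context {G : Group}.
Let HD := derived_nsub G.
Notation D := (@derived G).
Notation cg := (cong (@derived G)).

Lemma cg_eq (x y : G) : x = y -> cg x y.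
Proof. intros ->. apply (cong_refl HD). Qed.
Lemma cg_ab (x y : G) : cg (x ** y) (y ** x).
Proof. apply cong_swap; auto. apply gen_base. eauto. Qed.
Lemma cg_D (x y : G) : cg x y -> D x -> D y.
Proof. unfold cong. intros H Hx. pose proof (nsM HD _ _ Hx H) as H'. gs_in H'. exact H'. Qed.
Lemma cg_lcancel (z x y : G) : cg (z ** x) (z ** y) -> cg x y.
Proof. unfold cong. gs. auto. Qed.
Lemma cg_rcancel (z x y : G) : cg (x ** z) (y ** z) -> cg x y.
Proof.
  intro H. pose proof (cong_mul HD _ _ _ _ H (cong_refl HD (z^-1))) as H'.
  gs_in H'. exact H'.
Qed.
Lemma cg_pow (x y : G) k : cg x y -> cg (gpow x k) (gpow y k).
Proof. intro H. induction k; simpl. apply (cong_refl HD). now apply (cong_mul HD). Qed.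
Lemma cg_powM (x y : G) k : cg (gpow (x ** y) k) (gpow x k ** gpow y k).
Proof.
  induction k; simpl. apply cg_eq; gs; reflexivity.
  apply (cong_trans HD) with (x ** y ** (gpow x k ** gpow y k)).
  apply (cong_mul HD). apply (cong_refl HD). exact IHk.
  apply (cong_trans HD) with (x ** (y ** gpow x k) ** gpow y k). apply cg_eq; gs; reflexivity.
  apply (cong_trans HD) with (x ** (gpow x k ** y) ** gpow y k).
  apply (cong_mul HD); [apply (cong_mul HD)|]; try apply (cong_refl HD). apply cg_ab.
  apply cg_eq; gs; reflexivity.
Qed.
Lemma D_1 (x : G) : cg x (gone G) -> D x.
Proof. unfold cong. gs. intro H. apply (nsV HD) in H. gs_in H. exact H. Qed.
Lemma D_1' (x : G) : D x -> cg x (gone G).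
Proof. unfold cong. gs. intro H. now apply (nsV HD). Qed.

Lemma gen_nil_one (x : G) : gen (fun y => In y nil) x -> x = gone G.
Proof.
  apply (gen_ind_sub _ (fun z => z = gone G)); auto.
  - intros y [].
  - intros y z -> ->. apply g_1l.
  - intros y ->. apply g_V1.
Qed.

Lemma rep (a : G) l x : gen (fun y => In y (a :: l)) x ->
  exists m1 m2 b, gen (fun y => In y l) b /\ cg (x ** gpow a m2) (gpow a m1 ** b).
Proof.
  apply (gen_ind_sub _ (fun x => exists m1 m2 b, gen (fun y => In y l) b /\ cg (x ** gpow a m2) (gpow a m1 ** b))).
  - intros y [<-|Hy].
    + exists 1, 0, (gone G). split. apply gen_one. apply cg_eq. simpl. gs. reflexivity.
    + exists 0, 0, y. split. now apply gen_base. apply cg_eq. simpl. gs. reflexivity.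
  - exists 0, 0, (gone G). split. apply gen_one. apply cg_eq. simpl. gs. reflexivity.
  - intros x1 x2 [m1 [m2 [b [Hb H]]]] [n1 [n2 [c [Hc H']]]].
    exists (m1 + n1), (m2 + n2), (b ** c). split. now apply gen_mul.
    rewrite !gpow_add.
    apply (cong_trans HD) with (x1 ** gpow a m2 ** (x2 ** gpow a n2)).
    { apply (cong_trans HD) with (x1 ** (x2 ** gpow a m2) ** gpow a n2). apply cg_eq; gs; reflexivity.
      apply (cong_trans HD) with (x1 ** (gpow a m2 ** x2) ** gpow a n2).
      apply (cong_mul HD); [apply (cong_mul HD)|]; try apply (cong_refl HD). apply cg_ab.
      apply cg_eq; gs; reflexivity. }
    apply (cong_trans HD) with (gpow a m1 ** b ** (gpow a n1 ** c)).
    now apply (cong_mul HD).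
    apply (cong_trans HD) with (gpow a m1 ** (b ** gpow a n1) ** c). apply cg_eq; gs; reflexivity.
    apply (cong_trans HD) with (gpow a m1 ** (gpow a n1 ** b) ** c).
    apply (cong_mul HD); [apply (cong_mul HD)|]; try apply (cong_refl HD). apply cg_ab.
    apply cg_eq; gs; reflexivity.
  - intros y [m1 [m2 [b [Hb H]]]]. exists m2, m1, (b^-1). split. now apply gen_inv.
    apply (cong_trans HD) with (y^-1 ** (gpow a m1 ** b) ** b^-1). apply cg_eq; gs; reflexivity.
    apply (cong_trans HD) with (y^-1 ** (y ** gpow a m2) ** b^-1).
    apply (cong_mul HD); [apply (cong_mul HD)|]; try apply (cong_refl HD). now apply (cong_sym HD).
    apply cg_eq; gs; reflexivity.
Qed.

Lemma exponent (l : list G) : exists e, 1 <= e /\ forall x, gen (fun y => In y l) x ->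
  forall k, 1 <= k -> D (gpow x k) -> D (gpow x e).
Proof.
  induction l as [|a l [e' [He' IH]]].
  - exists 1. split; auto. intros x Hx k _ _. rewrite (gen_nil_one x Hx). simpl. gs. apply (ns1 HD).
  - destruct (classic (exists d, 1 <= d /\ exists c, gen (fun y => In y l) c /\ cg (gpow a d) c))
      as [[d [Hd [c [Hc Hac]]]]|Hno].
    + exists (d * e'). split. lia.
      intros x Hx k Hk Hxk. destruct (rep a l x Hx) as [m1 [m2 [b [Hb H]]]].
      set (y := gpow c m1 ** gpow b d ** (gpow c m2)^-1).
      assert (Hy : gen (fun y => In y l) y).
      { unfold y. apply gen_mul. apply gen_mul; now apply gpow_gen. apply gen_inv; now apply gpow_gen. }
      assert (Hxy : cg (gpow x d) y).
      { apply cg_rcancel with (gpow c m2). unfold y.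
        apply (cong_trans HD) with (gpow c m1 ** gpow b d).
        2: apply cg_eq; gs; reflexivity.
        apply (cong_trans HD) with (gpow (gpow a d) m1 ** gpow b d).
        2: apply (cong_mul HD); [apply cg_pow; exact Hac|apply (cong_refl HD)].
        apply (cong_trans HD) with (gpow x d ** gpow (gpow a d) m2).
        apply (cong_mul HD); [apply (cong_refl HD)|apply (cong_sym HD); now apply cg_pow].
        rewrite <- !gpow_mul.
        apply (cong_trans HD) with (gpow (x ** gpow a m2) d).
        { apply (cong_sym HD). rewrite (Nat.mul_comm d m2), gpow_mul. apply cg_powM. }
        apply (cong_trans HD) with (gpow (gpow a m1 ** b) d). now apply cg_pow.
        rewrite (Nat.mul_comm d m1), gpow_mul. apply cg_powM. }
      rewrite gpow_mul. apply cg_D with (gpow y e').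
      { apply cg_pow. now apply (cong_sym HD). }
      apply (IH y Hy k Hk). apply cg_D with (gpow (gpow x d) k). now apply cg_pow.
      rewrite <- gpow_mul, Nat.mul_comm, gpow_mul. apply D_1.
      apply (cong_trans HD) with (gpow (gone G) d). apply cg_pow. now apply D_1'.
      rewrite gpow_one. apply (cong_refl HD).
    + exists e'. split; auto.
      intros x Hx k Hk Hxk. destruct (rep a l x Hx) as [m1 [m2 [b [Hb H]]]].
      assert (Hk2 : cg (gpow a (m2 * k)) (gpow a (m1 * k) ** gpow b k)).
      { apply (cong_trans HD) with (gpow (x ** gpow a m2) k).
        - rewrite gpow_mul. apply (cong_trans HD) with (gpow x k ** gpow (gpow a m2) k).
          + apply (cong_trans HD) with (gone G ** gpow (gpow a m2) k). apply cg_eq; gs; reflexivity.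
            apply (cong_mul HD). apply (cong_sym HD). now apply D_1'. apply (cong_refl HD).
          + apply (cong_sym HD). apply cg_powM.
        - apply (cong_trans HD) with (gpow (gpow a m1 ** b) k). now apply cg_pow.
          rewrite gpow_mul. apply cg_powM. }
      destruct (lt_eq_lt_dec m1 m2) as [[Hlt|Heq]|Hgt].
      * exfalso. apply Hno. exists ((m2 - m1) * k). split. nia.
        exists (gpow b k). split. now apply gpow_gen.
        apply cg_lcancel with (gpow a (m1 * k)). rewrite <- gpow_add.
        replace (m1 * k + (m2 - m1) * k) with (m2 * k) by nia. exact Hk2.
      * subst m2.
        assert (Hxb : cg x b).
        { apply cg_rcancel with (gpow a m1). apply (cong_trans HD) with (gpow a m1 ** b). exact H. apply cg_ab. }
        apply cg_D with (gpow b e'). apply cg_pow. now apply (cong_sym HD).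
        apply (IH b Hb k Hk). apply cg_D with (gpow x k). now apply cg_pow. exact Hxk.
      * exfalso. apply Hno. exists ((m1 - m2) * k). split. nia.
        exists ((gpow b k)^-1). split. apply gen_inv. now apply gpow_gen.
        apply cg_rcancel with (gpow b k). apply cg_lcancel with (gpow a (m2 * k)).
        rewrite g_Vl, g_1r, <- g_assoc, <- gpow_add.
        replace (m2 * k + (m1 - m2) * k) with (m1 * k) by nia. apply (cong_sym HD). exact Hk2.
Qed.
End Ab.

Definition tcomm (a b : term) : term := tmul (tmul (tinv a) (tinv b)) (tmul a b).
Fixpoint tpow (t : term) (n : nat) : term := match n with 0 => tone | S m => tmul t (tpow t m) end.
Fixpoint phi (m K : nat) (t acc : term) : formula :=
  match K with
  | 0 => fEq t acc
  | S K' => fEx m (fEx (S m) (phi (S (S m)) K' t (tmul acc (tcomm (tvar m) (tvar (S m))))))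
  end.

Definition lowvars (m : nat) (t : term) := forall i, m <= i -> tfree i t = false.

Lemma lv_var m i : i < m -> lowvars m (tvar i).
Proof. intros H j Hj. simpl. apply Nat.eqb_neq. lia. Qed.
Lemma lv_one m : lowvars m tone. Proof. intros j _. reflexivity. Qed.
Lemma lv_mul m a b : lowvars m a -> lowvars m b -> lowvars m (tmul a b).
Proof. intros Ha Hb j Hj. simpl. now rewrite Ha, Hb. Qed.
Lemma lv_inv m a : lowvars m a -> lowvars m (tinv a).
Proof. intros Ha j Hj. simpl. now rewrite Ha. Qed.
Lemma lv_comm m a b : lowvars m a -> lowvars m b -> lowvars m (tcomm a b).
Proof. intros. unfold tcomm. auto using lv_mul, lv_inv. Qed.
Lemma lv_pow m a n : lowvars m a -> lowvars m (tpow a n).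
Proof. intros. induction n; simpl; auto using lv_mul, lv_one. Qed.
Lemma lv_S m a : lowvars m a -> lowvars (S m) a.
Proof. intros H j Hj. apply H. lia. Qed.

Lemma teval_upd (G : Group) env m v t : tfree m t = false -> teval G (upd G env m v) t = teval G env t.
Proof.
  induction t; simpl; intro H; auto.
  - unfold upd. rewrite Nat.eqb_sym, H. reflexivity.
  - apply Bool.orb_false_iff in H as [H1 H2]. now rewrite IHt1, IHt2.
  - now rewrite IHt.
Qed.
Lemma teval_pow (G : Group) env t n : teval G env (tpow t n) = gpow (teval G env t) n.
Proof. induction n; simpl; auto. now rewrite IHn. Qed.

Lemma sat_phi (G : Group) K : forall m t acc env, lowvars m t -> lowvars m acc ->
  (sat G env (phi m K t acc) <-> exists ps : list (G * G), length ps = K /\ teval G env t = teval G env acc ** prodl ps).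
Proof.
  induction K as [|K IH]; intros m t acc env Ht Hacc; simpl.
  - split.
    + intro E. exists nil. split; auto. simpl. rewrite E. gs. reflexivity.
    + intros [ps [L E]]. destruct ps; [|discriminate]. rewrite E. simpl. gs. reflexivity.
  - assert (Hev : forall v w (s : term), lowvars m s ->
       teval G (upd G (upd G env m v) (S m) w) s = teval G env s).
    { intros v w s Hs. rewrite teval_upd by (apply Hs; lia). apply teval_upd. apply Hs. lia. }
    assert (Hacc' : lowvars (S (S m)) (tmul acc (tcomm (tvar m) (tvar (S m))))).
    { apply lv_mul. now do 2 apply lv_S. apply lv_comm; apply lv_var; lia. }
    split.
    + intros [v [w H]]. apply IH in H; [|now do 2 apply lv_S|exact Hacc'].
      destruct H as [ps [L E]]. exists ((v, w) :: ps). split. simpl; auto.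
      rewrite Hev in E by exact Ht. simpl in E. rewrite Hev in E by exact Hacc.
      unfold upd in E. rewrite (proj2 (Nat.eqb_neq m (S m))) in E by lia. rewrite !Nat.eqb_refl in E.
      rewrite E. simpl. fold (comm v w). gs. reflexivity.
    + intros [ps [L E]]. destruct ps as [|[v w] ps]; [discriminate|]. simpl in L.
      exists v, w. apply IH; [now do 2 apply lv_S|exact Hacc'|].
      exists ps. split. lia.
      rewrite Hev by exact Ht. simpl. rewrite Hev by exact Hacc.
      unfold upd. rewrite (proj2 (Nat.eqb_neq m (S m))) by lia. rewrite !Nat.eqb_refl.
      rewrite E. simpl. fold (comm v w). gs. reflexivity.
Qed.

Lemma free_phi K : forall m t acc n, free_in n (phi m K t acc) = true -> tfree n t = true \/ tfree n acc = true.
Proof.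
  induction K as [|K IH]; intros m t acc n H; simpl in H.
  - apply Bool.orb_true_iff in H. exact H.
  - apply Bool.andb_true_iff in H as [H1 H]. apply Bool.andb_true_iff in H as [H2 H].
    apply IH in H as [H|H]; auto. simpl in H.
    apply Bool.orb_true_iff in H as [H|H]; auto.
    apply Bool.negb_true_iff in H1, H2. simpl in H. rewrite H1, H2 in H. discriminate.
Qed.

Lemma free_P K t n : lowvars 2 t -> free_in (S (S n)) (phi 2 K t tone) = false.
Proof.
  intros Ht. destruct (free_in (S (S n)) (phi 2 K t tone)) eqn:E; auto.
  apply free_phi in E as [E|E]. rewrite Ht in E by lia. discriminate. discriminate.
Qed.

Lemma free_P' K t n : tfree n t = false -> free_in n (phi 2 K t tone) = false.
Proof.
  intros Ht. destruct (free_in n (phi 2 K t tone)) eqn:E; auto.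
  apply free_phi in E as [E|E]. congruence. discriminate.
Qed.

Ltac solve_tf := first [reflexivity | (apply (lv_pow 1); [apply lv_var; lia | lia])].

Lemma sat_P (G : Group) K env t : lowvars 2 t -> (sat G env (phi 2 K t tone) <-> Cw K (teval G env t)).
Proof.
  intros Ht. rewrite sat_phi by (auto; apply lv_one). simpl. unfold Cw.
  split; intros [ps [L E]]; exists ps; split; auto; rewrite E; gs; reflexivity.
Qed.

Lemma transfer (G H : Group) f : elem_equiv G H -> sentence f -> (forall e, sat G e f) -> forall e, sat H e f.
Proof. intros HGH Hf HG. apply (HGH f Hf). exact HG. Qed.

Global Hint Resolve lv_one lv_mul lv_inv lv_comm lv_pow : lvdb.
Global Hint Extern 1 (lowvars _ (tvar _)) => (apply lv_var; lia) : lvdb.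

Theorem mainTheorem7 (G : Group) :
  finitely_generated G -> nilpotent G ->
  exists psi : formula,
    unary_formula psi /\
    forall H : Group, elem_equiv G H -> defines H psi (@Is_derived H).
Proof.
  intros Hfg Hnil.
  destruct (width Hfg Hnil) as [K HK].
  destruct Hfg as [l Hl].
  destruct (exponent l) as [e [He HE]].
  set (P := fun t => phi 2 K t tone).
  set (x := tvar 0). set (y := tvar 1).
  assert (CwD : forall z : G, Cw K z <-> derived z).
  { intro z. split. apply Cw_derived. apply HK. }
  exists (P (tpow x e)). split.
  { intros n Hn. destruct (free_in n (P (tpow x e))) eqn:E; auto.
    apply free_phi in E as [E|E]; [|discriminate].
    assert (Hlv : lowvars 1 (tpow x e)) by (unfold x; auto with lvdb).
    rewrite Hlv in E by lia. discriminate. }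
  intros H HGH.
  set (s_mul := fAll 0 (fAll 1 (fImp (P x) (fImp (P y) (P (tmul x y)))))).
  set (s_inv := fAll 0 (fImp (P x) (P (tinv x)))).
  set (s_comm := fAll 0 (fAll 1 (P (tcomm x y)))).
  set (s_one := P tone).
  set (s_k := fun k => fAll 0 (fImp (P (tpow x k)) (P (tpow x e)))).
  assert (Lx : lowvars 2 x) by (unfold x; auto with lvdb).
  assert (Ly : lowvars 2 y) by (unfold y; auto with lvdb).
  assert (Hs_mul : forall env, sat H env s_mul).
  { apply (transfer G). exact HGH.
    - intros [|[|n]]; simpl; auto. unfold P. rewrite !free_P; auto with lvdb.
    - intros env v w. unfold P. simpl. rewrite !sat_P by auto with lvdb. simpl. unfold upd. simpl.
      rewrite !CwD. apply gen_mul. }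
  assert (Hs_inv : forall env, sat H env s_inv).
  { apply (transfer G). exact HGH.
    - intros [|[|n]]; simpl; auto; unfold P; rewrite !free_P' by solve_tf; reflexivity.
    - intros env v. unfold P. simpl. rewrite !sat_P by auto with lvdb. simpl. unfold upd. simpl.
      rewrite !CwD. apply gen_inv. }
  assert (Hs_comm : forall env, sat H env s_comm).
  { apply (transfer G). exact HGH.
    - intros [|[|n]]; simpl; auto. unfold P. rewrite !free_P; auto with lvdb.
    - intros env v w. unfold P. simpl. rewrite !sat_P by auto with lvdb. simpl. unfold upd. simpl.
      rewrite !CwD. apply gen_base. exists v, w. reflexivity. }
  assert (Hs_one : forall env, sat H env s_one).
  { apply (transfer G). exact HGH.
    - intros n. destruct n as [|[|n]]; unfold s_one, P.
      + destruct (free_in 0 (phi 2 K tone tone)) eqn:E; auto. apply free_phi in E as [E|E]; discriminate.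
      + destruct (free_in 1 (phi 2 K tone tone)) eqn:E; auto. apply free_phi in E as [E|E]; discriminate.
      + apply free_P. auto with lvdb.
    - intros env. unfold s_one, P. rewrite sat_P by auto with lvdb. simpl. apply CwD. apply gen_one. }
  assert (Hs_k : forall k env, 1 <= k -> sat H env (s_k k)).
  { intros k env0 Hk. apply (transfer G). exact HGH.
    - intros [|[|n]]; simpl; auto; unfold P; rewrite !free_P' by solve_tf; reflexivity.
    - intros env v. unfold P. simpl. rewrite !sat_P by auto with lvdb. rewrite !teval_pow. simpl. unfold upd. simpl.
      rewrite !CwD. intros Hv. apply (HE v (Hl v) k Hk Hv). }
  assert (CwH : forall z : H, Cw K z <-> derived z).
  { intro z. split. apply Cw_derived.
    apply (gen_ind_sub _ (Cw K)).
    - intros w [a [b ->]].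
      assert (Hc : sat H (upd H (upd H (fun _ => a) 0 a) 1 b) (P (tcomm x y))) by exact (Hs_comm _ a b).
      unfold P in Hc. rewrite sat_P in Hc by auto with lvdb. exact Hc.
    - pose proof (Hs_one (fun _ => gone H)) as Hc. unfold s_one, P in Hc.
      rewrite sat_P in Hc by auto with lvdb. exact Hc.
    - intros a b Ha Hb.
      assert (Hc : sat H (upd H (upd H (fun _ => a) 0 a) 1 b) (P x) ->
                   sat H (upd H (upd H (fun _ => a) 0 a) 1 b) (P y) ->
                   sat H (upd H (upd H (fun _ => a) 0 a) 1 b) (P (tmul x y))) by exact (Hs_mul _ a b).
      unfold P in Hc. rewrite !sat_P in Hc by auto with lvdb. exact (Hc Ha Hb).
    - intros a Ha.
      assert (Hc : sat H (upd H (fun _ => a) 0 a) (P x) -> sat H (upd H (fun _ => a) 0 a) (P (tinv x)))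
        by exact (Hs_inv _ a).
      unfold P in Hc. rewrite !sat_P in Hc by auto with lvdb. exact (Hc Ha). }
  intros env. unfold P. rewrite sat_P by auto with lvdb. rewrite teval_pow. simpl. rewrite CwH.
  split.
  - intro Hd. exists e. auto.
  - intros [k [Hk Hd]].
    assert (Hc : sat H (upd H (fun _ => env 0) 0 (env 0)) (P (tpow x k)) ->
                 sat H (upd H (fun _ => env 0) 0 (env 0)) (P (tpow x e))) by exact (Hs_k k (fun _ => env 0) Hk (env 0)).
    unfold P in Hc. rewrite !sat_P in Hc by auto with lvdb. rewrite !teval_pow in Hc. simpl in Hc.
    apply CwH. apply Hc. apply CwH. exact Hd.
Qed.
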